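(* Let $\Gamma$ be a finite group, let $\mathcal{S}_\Gamma$ be a Schur ring over $\Gamma$ with basis $\mathcal{B}[\mathcal{S}_\Gamma]$, and let $\gamma \in \Gamma$ have odd order $n$. Let $r$ and $t$ be integers such that $r - t$ is relatively prime to $n$. If $\gamma^r + \gamma^t$ is an element of $\mathcal{B}[\mathcal{S}_\Gamma]$, then $\gamma^s + \gamma^{-s}$ is also an element of $\mathcal{B}[\mathcal{S}_\Gamma]$ for every integer $s$ relatively prime to $n$.
   Context: For a subset $X \subseteq \Gamma$ write $\overline{X} = \sum_{x \in X} x \in \mathbb{Z}[\Gamma]$ (a ''simple quantity''), and $X^{-1} = \{x^{-1} : x \in X\}$. A Schur ring over $\Gamma$ is a subring $\mathcal{S}$ of the group ring $\mathbb{Z}[\Gamma]$, closed under addition, multiplication and multiplication by integers, for which there is a partition $\{B_0, B_1, \dots, B_{r-1}\}$ of $\Gamma$ with $B_0 = \{1\}$ such that every element of $\mathcal{S}$ has a unique representation $\sum_{i} \beta_i \overline{B}_i$ with integer coefficients, $\sum_i \overline{B}_i = \overline{\Gamma}$, and for each $i$ there is $j$ with $\overline{B}_j = \overline{B_i^{-1}}$. The set $\{\overline{B}_0, \dots, \overline{B}_{r-1}\}$ is the basis $\mathcal{B}[\mathcal{S}]$ of the Schur ring, and its members are the basic elements. Thus ''$\gamma^r + \gamma^t \in \mathcal{B}[\mathcal{S}_\Gamma]$'' means $\{\gamma^r, \gamma^t\}$ is one of the basic sets. *)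

(* Defs.v *)
From mathcomp Require Import all_boot all_order all_algebra all_fingroup.
Set Implicit Arguments. Unset Strict Implicit. Unset Printing Implicit Defensive.
Import GRing.Theory Num.Theory.
Local Open Scope ring_scope.
Local Open Scope group_scope.

(* Elements of the group ring Z[G] are represented as coefficient functions
   G -> int (an element sum_g a_g g is the function g |-> a_g). *)
Definition grpring (gT : finGroupType) := gT -> int.

Definition simpleq (gT : finGroupType) (X : {set gT}) : grpring gT :=
  fun g => ((g \in X) : nat)%:Z.

Definition grmul (gT : finGroupType) (f h : grpring gT) : grpring gT :=
  fun g => (\sum_(x : gT) f x * h ((x^-1 * g)%g))%R.

Definition in_span (gT : finGroupType) (P : {set {set gT}}) (f : grpring gT) :=
  exists c : {set gT} -> int,
    forall g, f g = (\sum_(B in P) c B * simpleq B g)%R.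

(* P is the basis partition of a Schur ring over gT: P partitions gT with
   {1} a block, is closed under inversion of blocks, and the Z-span of the
   simple quantities of the blocks (which contains 1 = \overline{\{1\}},
   is closed under addition and integer multiples, and in which
   representations are unique since the blocks are disjoint and nonempty)
   is closed under multiplication; by bilinearity, the latter is equivalent
   to products of basic elements lying in the span. *)
Definition schur_basis (gT : finGroupType) (P : {set {set gT}}) : Prop :=
  [/\ partition P [set: gT],
      [set 1] \in P,
      (forall B, B \in P -> B^-1 \in P) &
      (forall B C, B \in P -> C \in P -> in_span P (grmul (simpleq B) (simpleq C)))].

Definition expgz (gT : finGroupType) (x : gT) (z : int) : gT :=
  match z with
  | Posz n => x ^+ n
  | Negz n => (x ^+ n.+1)^-1
  end.

(* Main.v *)
Require Import Defs.
From mathcomp Require Import all_boot all_order all_algebra all_fingroup all_solvable.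
From mathcomp Require Import ring.
Set Implicit Arguments. Unset Strict Implicit. Unset Printing Implicit Defensive.
Import GRing.Theory Num.Theory.
Local Open Scope ring_scope.
Local Open Scope group_scope.

Section Span.
Variables (gT : finGroupType) (P : {set {set gT}}).
Hypothesis hpart : partition P [set: gT].
Hypothesis hmul : forall B C, B \in P -> C \in P -> in_span P (grmul (simpleq B) (simpleq C)).

Let tI : trivIset P. Proof. by case/and3P: hpart. Qed.
Let covP g : g \in cover P. Proof. by case/and3P: hpart => /eqP -> _ _; rewrite inE. Qed.

Definition cst (f : grpring gT) := forall g h, h \in pblock P g -> f g = f h.

Lemma span_cst f : in_span P f -> cst f.
Proof.
case=> c Hc.
have E g : f g = c (pblock P g).
  rewrite Hc (bigD1 (pblock P g)) ?pblock_mem //= /simpleq mem_pblock covP /= mulr1.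
  rewrite big1 ?addr0 // => B /andP[PB nB].
  case gB: (g \in B); last by rewrite mulr0.
  by rewrite (def_pblock tI PB gB) eqxx in nB.
by move=> g h hg; rewrite !E (same_pblock tI hg).
Qed.

Lemma cst_span f : cst f -> in_span P f.
Proof.
move=> Hf; exists (fun B => f (repr B)) => g.
rewrite (bigD1 (pblock P g)) ?pblock_mem //= /simpleq mem_pblock covP /= mulr1.
rewrite big1 ?addr0.
  by apply: Hf; apply: mem_repr (g) _; rewrite mem_pblock covP.
move=> B /andP[PB nB].
case gB: (g \in B); last by rewrite GRing.mulr0.
by rewrite (def_pblock tI PB gB) eqxx in nB.
Qed.

Lemma simpleq_span B : B \in P -> in_span P (simpleq B).
Proof.
move=> PB; apply: cst_span => g h hg; rewrite /simpleq.
have -> : (g \in B) = (h \in B); last by [].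
apply/idP/idP => [gB|hB].
  by rewrite -(def_pblock tI PB gB).
by rewrite -(def_pblock tI PB hB) (same_pblock tI hg) mem_pblock covP.
Qed.

Lemma grmul_span f h : in_span P f -> in_span P h -> in_span P (grmul f h).
Proof.
case=> c Hc [d Hd]; apply: cst_span.
have E g : grmul f h g = (\sum_(B in P) \sum_(C in P) c B * d C * grmul (simpleq B) (simpleq C) g)%R.
  rewrite /grmul.
  under eq_bigr => y _ do rewrite Hc Hd big_distrlr /=.
  rewrite exchange_big /=; apply: eq_bigr => B _.
  rewrite exchange_big /=; apply: eq_bigr => C _.
  rewrite GRing.mulr_sumr; apply: eq_bigr => y _.
  by rewrite GRing.mulrACA.
move=> g g' gg'; rewrite !E; apply: eq_bigr => B PB; apply: eq_bigr => C PC.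
by congr (_ * _)%R; apply: (span_cst (hmul PB PC)).
Qed.
End Span.
Section Expz.
Variables (gT : finGroupType) (g : gT).

Lemma absmod z : (`|(z %% #[g])%Z|%N)%:Z = (z %% #[g])%Z.
Proof. by rewrite gez0_abs // modz_ge0 // -lt0n order_gt0. Qed.

Lemma expgz_mod z : expgz g z = g ^+ `|(z %% #[g])%Z|%N.
Proof.
case: z => m /=; first by rewrite modz_nat absz_nat expg_mod_order.
set k := `|_|%N.
have : (#[g]%:Z %| k%:Z - Negz m)%Z by rewrite absmod -eqz_mod_dvd modz_mod.
rewrite NegzE opprK -PoszD dvdzE !absz_nat order_dvdn expgD => /eqP H.
apply/eqP; rewrite eq_invg_mul; apply/eqP.
by rewrite -expgD addnC expgD.
Qed.

Lemma expgzN z : expgz g (- z)%R = (expgz g z)^-1.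
Proof. by case: z => [[|m]|m] //=; rewrite ?invg1 ?invgK. Qed.

Lemma expgzD u v : expgz g (u + v)%R = expgz g u * expgz g v.
Proof.
rewrite !expgz_mod -expgD; apply/eqP; rewrite eq_expg_mod_order.
rewrite -eqz_nat.
rewrite -!modz_nat PoszD !absmod modz_mod.
by rewrite modzDm.

Qed.

Lemma gen_expgz z : coprimez z #[g] -> generator <[g]> (expgz g z).
Proof.
rewrite expgz_mod generator_coprime /coprimez -gcdz_modl.
by rewrite -/(coprimez _ _) coprimezE absz_nat coprime_sym.
Qed.
End Expz.
Section Core.
Variables (gT : finGroupType) (P : {set {set gT}}).
Hypothesis hP : schur_basis P.

Let hpart : partition P [set: gT]. Proof. by case: hP. Qed.
Let hmul : forall B C, B \in P -> C \in P -> in_span P (grmul (simpleq B) (simpleq C)).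
Proof. by case: hP. Qed.
Let P1 : [set 1] \in P. Proof. by case: hP. Qed.
Let tI : trivIset P. Proof. by case/and3P: hpart. Qed.
Let covP g : g \in cover P. Proof. by case/and3P: hpart => /eqP -> _ _; rewrite inE. Qed.

Local Notation cst := (cst P).

Lemma cst_ext f f' : cst f -> (forall g, f g = f' g) -> cst f'.
Proof. by move=> H E g h hg; rewrite -!E; apply: H. Qed.

Lemma cstB f f' : cst f -> cst f' -> cst (fun g => f g - f' g)%R.
Proof. by move=> H H' g h hg; rewrite (H _ _ hg) (H' _ _ hg). Qed.

Lemma cstM f f' : cst f -> cst f' -> cst (grmul f f').
Proof.
move=> H H'; apply: (span_cst hpart); apply: (grmul_span hpart hmul); exact: (cst_span hpart).
Qed.

Lemma cst_simpleq B : B \in P -> cst (simpleq B).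
Proof. by move=> PB; apply: (span_cst hpart); apply: (simpleq_span hpart). Qed.

Lemma bz_inj (b b' : bool) : (b : nat)%:Z = (b' : nat)%:Z -> b = b'.
Proof. by case: b; case: b'. Qed.

Lemma sum_ind (z : gT) (F : gT -> int) :
  (\sum_(u : gT) ((u == z) : nat)%:Z * F u)%R = F z.
Proof.
rewrite (bigD1 z) //= eqxx mul1r big1 ?addr0 // => u /negbTE ->.
by rewrite mul0r.
Qed.

Lemma grmul_simpleq (A : {set gT}) (h : grpring gT) (g : gT) : grmul (simpleq A) h g = (\sum_(u in A) h ((u^-1 * g)%g))%R.
Proof.
rewrite /grmul /simpleq [RHS]big_mkcond /=; apply: eq_bigr => u _.
by case: (u \in A); rewrite ?mul1r ?mul0r.
Qed.

Lemma ind_set1 z : cst (fun g => ((g == z) : nat)%:Z) -> [set z] \in P.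
Proof.
move=> H; suff <- : pblock P z = [set z] by rewrite pblock_mem.
apply/setP => h; rewrite in_set1; apply/idP/eqP => [hz | ->].
  by have := H _ _ hz; rewrite eqxx => /bz_inj /esym /eqP.
by rewrite mem_pblock.
Qed.

Lemma sq1 (z : gT) : odd #[z] -> (1 < #[z])%N -> z * z != 1.
Proof.
move=> od gt; apply/negP => /eqP h.
have : (#[z] %| 2)%N by rewrite order_dvdn expgS expg1 h.
move/(dvdn_leq (isT : (0 < 2)%N)).
by move: od gt; case: #[z] => [|[|[|]]].
Qed.

Lemma singleton_pow y : [set y] \in P -> forall j, [set y ^+ j] \in P.
Proof.
move=> Py; elim=> [|j IH]; first by rewrite expg0.
apply: ind_set1; apply: (cst_ext (cstM (cst_simpleq Py) (cst_simpleq IH))) => g.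
rewrite grmul_simpleq big_set1 /simpleq in_set1 expgS.
congr (Posz (nat_of_bool _)).
apply/eqP/eqP => [<-|->]; by rewrite ?mulKVg ?mulKg.
Qed.


Lemma core (x y a b : gT) : odd #[x] -> (1 < #[x])%N -> x = a * b^-1 ->
  [set a; b] \in P -> y \in <[x]> -> x \in <[y]> -> #[y] = #[x] ->
  [set y; y^-1] \in P.
Proof.
move=> od gt xab PB hy hx oy.
have x1 : x != 1 by apply/eqP => x1; move: gt; rewrite x1 order1.
have ab : a != b by apply/eqP => e; move: x1; rewrite xab e mulgV eqxx.
have PBi : [set a; b]^-1 \in P by case: hP => _ _ H _; apply: H.
pose C (j : nat) (g : gT) := (((g == (x ^+ j)%g) : nat)%:Z + ((g == ((x ^+ j)^-1)%g) : nat)%:Z)%R.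
have C0 : cst (C 0%N).
  move=> g h hg; have := cst_simpleq P1 hg; rewrite /simpleq !in_set1 => /bz_inj.
  by rewrite /C expg0 invg1 => ->.
have eqlem (g u v : gT) : (g^-1 * u == v) = (g == u * v^-1).
  by apply/eqP/eqP => [<-|->]; rewrite invMg invgK ?mulKVg ?mulgKV.
have pair_ind (w : gT) : ((w \in [set a; b]) : nat)%:Z = (((w == a) : nat)%:Z + ((w == b) : nat)%:Z)%R.
  rewrite !inE; case: eqP => [->|]; first by rewrite (negbTE ab).
  by case: eqP.
have C1 : cst (C 1%N).
  apply: (cst_ext (cstB (cstM (cst_simpleq PB) (cst_simpleq PBi)) C0)) => g.
  rewrite grmul_simpleq big_setU1 ?in_set1 // big_set1 /simpleq !mem_invg !invMg !invgK !pair_ind.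
  rewrite !eqlem !mulgV /C expg0 expg1 invg1 xab invMg invgK.
  ring.

have grC1 (h : grpring gT) g : grmul (C 1%N) h g = (h (x^-1 * g)%g + h (x * g)%g)%R.
  rewrite /grmul; under eq_bigr do rewrite mulrDl.
  by rewrite big_split /= !sum_ind expg1 invgK.
have cheb m g : C m.+2 g = (grmul (C 1%N) (C m.+1) g - C m g)%R.
  rewrite grC1 /C.
  have e1 : (x^-1 * g == x ^+ m.+1) = (g == x ^+ m.+2).
    by rewrite (expgS x m.+1); apply/eqP/eqP => [<-|->]; rewrite ?mulKVg ?mulKg.
  have e2 : (x^-1 * g == (x ^+ m.+1)^-1) = (g == (x ^+ m)^-1).
    by rewrite expgSr invMg; apply/eqP/eqP => [/(mulgI x^-1)|->].
  have e3 : (x * g == x ^+ m.+1) = (g == x ^+ m).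
    by rewrite expgS; apply/eqP/eqP => [/(mulgI x)|->].
  have e4 : (x * g == (x ^+ m.+1)^-1) = (g == (x ^+ m.+2)^-1).
    by rewrite (expgSr x m.+1) invMg; apply/eqP/eqP => [<-|->]; rewrite ?mulKg ?mulKVg.
  rewrite e1 e2 e3 e4; ring.
have hC j : cst (C j) /\ cst (C j.+1).
  elim: j => [|j [IH1 IH2]]; first by split.
  split => //; apply: (cst_ext (cstB (cstM C1 IH2) IH1)) => g.
  by rewrite cheb.

case/cycleP: (hy) => k yk.
have yy : y * y != 1 by apply: sq1; rewrite oy.
have yinv : y != y^-1 by rewrite eq_sym eq_invg_mul.
have DP : pblock P y \in P by rewrite pblock_mem.
have sub h : h \in pblock P y -> (h == y) || (h == y^-1).
  move=> hD; have := (hC k).1 y h hD; rewrite /C -yk eqxx (negbTE yinv).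
  by case: (h == y); case: (h == y^-1).
have yiD : y^-1 \in pblock P y.
  apply/negPn/negP => nD.
  have Py : [set y] \in P.
    suff <- : pblock P y = [set y] by [].
    apply/setP => h; rewrite in_set1; apply/idP/eqP => [hD | ->].
      by case/orP: (sub h hD) => /eqP // e; move: nD; rewrite -e hD.
    by rewrite mem_pblock.
  case/cycleP: hx => j xj.
  have Px : [set x] \in P by rewrite xj; apply: singleton_pow.
  have hf := cstM (cst_simpleq Px) (cst_simpleq PB).
  have aD : b \in pblock P a by rewrite (def_pblock tI PB (set21 a b)) set22.
  have := hf _ _ aD; rewrite !grmul_simpleq !big_set1 /simpleq.
  have -> : x^-1 * a = b by rewrite xab invMg invgK mulgKV.
  rewrite set22 => /bz_inj /esym /set2P [e|e].
    move/negP: (sq1 od gt); apply; rewrite -[x * x]invgK invMg.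
    have -> : x^-1 * x^-1 = 1.
      by apply: (mulIg b); rewrite mul1g -mulgA e xab invMg invgK mulgKV.
    by rewrite invg1.
  by move: x1; rewrite -eq_invg1 -(mulIg b (x^-1) 1) ?eqxx // mul1g.
suff -> : [set y; y^-1] = pblock P y by [].
apply/setP => h; rewrite !inE; apply/idP/idP => [/orP[]/eqP->|/sub //] //.
by rewrite mem_pblock.
Qed.
End Core.

Theorem lemma2p1 (gT : finGroupType) (P : {set {set gT}}) (gamma : gT)
    (r t : int) :
  schur_basis P ->
  odd #[gamma] ->
  coprimez (r - t)%R #[gamma] ->
  [set expgz gamma r; expgz gamma t] \in P ->
  forall s : int, coprimez s #[gamma] ->
    [set expgz gamma s; expgz gamma (- s)%R] \in P.
Proof.
move=> hP od cop PB s cs.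
have [n1|gt] := leqP #[gamma] 1.
  have g1 : gamma = 1.
    by apply/eqP; rewrite -order_eq1 eqn_leq n1 order_gt0.
  have E z : expgz gamma z = 1 by rewrite expgz_mod g1 expg1n.
  by rewrite !E setUid; case: hP.
have gx := gen_expgz cop; have gy := gen_expgz cs.
rewrite /generator in gx gy.
have xab : expgz gamma (r - t) = expgz gamma r * (expgz gamma t)^-1.
  by rewrite expgzD expgzN.
have ox : #[expgz gamma (r - t)] = #[gamma] by rewrite !orderE -(eqP gx).
rewrite expgzN; apply: (core hP (x := expgz gamma (r - t)) (a := expgz gamma r) (b := expgz gamma t)) => //; rewrite ?ox //.
- by rewrite -(eqP gx) expgz_mod mem_cycle.
- by rewrite -(eqP gy) expgz_mod mem_cycle.
- by rewrite !orderE -(eqP gy).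
Qed.
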